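(* Fix $b\in\mathbb{N}$. A given $b$-pattern $P$ is realizable in $L=\mathbb{N}\times\mathbb{N}$ if and only if, for every prime $p$, the set of circles of $P$ does not contain a complete rectangle modulo $(p,p^b)$.
   Context: $\mathbb{N}=\{1,2,3,\dots\}$, $L=\mathbb{N}\times\mathbb{N}$. For $r,s\in\mathbb{N}$, $\gcd_b(r,s)=\max\{k\in\mathbb{N} : k\mid r \text{ and } k^b\mid s\}$; a point $(r,s)\in L$ is $b$-visible if $\gcd_b(r,s)=1$ and $b$-invisible otherwise. A $b$-pattern $P$ is obtained by choosing a positive integer $w$ and assigning to each $(r,s)\in L$ with $1\le r\le w$, $1\le s\le w^b$ either a cross, a circle, or neither. $P$ is realizable in $L$ if there is $(u,v)\in L$ such that $(u+r,v+s)$ is $b$-visible for every circle $(r,s)$ of $P$ and $(u+r,v+s)$ is $b$-invisible for every cross $(r,s)$ of $P$. For a positive integer $m$, a complete rectangle modulo $(m,m^b)$ is a collection of $m^{b+1}$ points of $L$ containing a complete system of residues of $\mathbb{Z}/m\mathbb{Z}\times\mathbb{Z}/m^b\mathbb{Z}$ (i.e. whose images under $(x,y)\mapsto(x \bmod m, y\bmod m^b)$ are all of $\mathbb{Z}/m\mathbb{Z}\times\mathbb{Z}/m^b\mathbb{Z}$). *)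

(* Defs.v *)
From mathcomp Require Import all_boot.
Set Implicit Arguments. Unset Strict Implicit. Unset Printing Implicit Defensive.

(* Points of L = N x N with N = {1,2,3,...} are pairs of positive naturals. *)

(* gcd_b(r,s) = max { k in N : k | r and k^b | s }.  For r >= 1 every such k
   satisfies k <= r, and k = 0 never divides r > 0, so the max ranges over k <= r. *)
Definition gcdb (b r s : nat) : nat :=
  \max_(k < r.+1 | (k %| r) && (k ^ b %| s)) k.

Definition b_visible (b r s : nat) : bool := gcdb b r s == 1.
Definition b_invisible (b r s : nat) : bool := ~~ b_visible b r s.

Inductive mark := Cross | Circle | Blank.
Definition mark_eqb (x y : mark) : bool :=
  match x, y with
  | Cross, Cross | Circle, Circle | Blank, Blank => true
  | _, _ => false end.

(* A b-pattern of width w is an assignment P : nat -> nat -> mark; only the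
   values at (r,s) with 1 <= r <= w, 1 <= s <= w^b are relevant. *)
Definition in_box (b w r s : nat) : Prop :=
  1 <= r <= w /\ 1 <= s <= w ^ b.

Definition is_circle (b w : nat) (P : nat -> nat -> mark) (r s : nat) : Prop :=
  in_box b w r s /\ P r s = Circle.

Definition is_cross (b w : nat) (P : nat -> nat -> mark) (r s : nat) : Prop :=
  in_box b w r s /\ P r s = Cross.

Definition realizable (b w : nat) (P : nat -> nat -> mark) : Prop :=
  exists u v : nat, 1 <= u /\ 1 <= v /\
    (forall r s, is_circle b w P r s -> b_visible b (u + r) (v + s)) /\
    (forall r s, is_cross b w P r s -> b_invisible b (u + r) (v + s)).

Definition complete_rectangle (b m : nat) (S : seq (nat * nat)) : Prop :=
  [/\ uniq S, size S = m ^ b.+1,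
      (forall x, x \in S -> 1 <= x.1 /\ 1 <= x.2) &
      (forall i j, i < m -> j < m ^ b ->
         exists2 x, x \in S & (x.1 %% m = i) /\ (x.2 %% m ^ b = j))].

Definition circles_contain_complete_rectangle (b w : nat)
    (P : nat -> nat -> mark) (m : nat) : Prop :=
  exists S : seq (nat * nat), complete_rectangle b m S /\
    (forall x, x \in S -> is_circle b w P x.1 x.2).

(* Main.v *)
Require Import Defs.
From mathcomp Require Import all_boot.

Lemma vis_of b R S : 0 < R ->
  (forall p, prime p -> p %| R -> p ^ b %| S -> False) -> b_visible b R S.
Proof.
move=> R0 H; rewrite /b_visible /gcdb eqn_leq; apply/andP; split.
  apply/bigmax_leqP => k /andP[kR kS].
  rewrite leqNgt; apply/negP => k1.
  apply: (H (pdiv k) (pdiv_prime k1)).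
    exact: dvdn_trans (pdiv_dvd k) kR.
  exact: dvdn_trans (dvdn_exp2r b (pdiv_dvd k)) kS.
have h1 : 1 < R.+1 by [].
apply: (leq_bigmax_cond (Ordinal h1)) => /=.
by rewrite dvd1n exp1n dvd1n.
Qed.

Lemma invis_of b R S p : 0 < R -> prime p -> p %| R -> p ^ b %| S ->
  b_invisible b R S.
Proof.
move=> R0 pp pR pS; rewrite /b_invisible /b_visible /gcdb.
have hp : p < R.+1 by rewrite ltnS; exact: dvdn_leq.
have := leq_bigmax_cond (F := fun k : 'I_R.+1 => nat_of_ord k)
   (P := fun k : 'I_R.+1 => (k %| R) && (k ^ b %| S)) (Ordinal hp).
rewrite /= pR pS => /(_ isT) hle.
apply/negP => /eqP E; rewrite E in hle.
by have := prime_gt1 pp; rewrite ltnNge hle.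
Qed.

Lemma neg_mod_dvd m a z c : a <= m -> z %% m = (m - a) %% m ->
  (m %| z + c) = (c == a %[mod m]).
Proof.
move=> am zm.
rewrite /dvdn -modnDml zm modnDml -(eqn_modDl (m - a)) subnK //.
by rewrite modnn.
Qed.

Lemma coprime_prod_seq m e (l : seq (nat * nat)) :
  all (fun x => coprime m (x.1 ^ e)) l -> coprime m (\prod_(x <- l) x.1 ^ e).
Proof.
elim: l => [|x l IH] /=; first by rewrite big_nil coprimen1.
by case/andP=> h1 h2; rewrite big_cons coprimeMr h1 IH.
Qed.

Lemma dvd_prod_seq {T : eqType} (F : T -> nat) (l : seq T) x :
  x \in l -> F x %| \prod_(y <- l) F y.
Proof.
elim: l => [|y l IH] //=; rewrite inE big_cons => /orP[/eqP->|/IH h].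
  exact: dvdn_mulr.
exact: dvdn_mull.
Qed.

Lemma crt e (l : seq (nat * nat)) :
  all prime (map fst l) -> uniq (map fst l) ->
  exists z, 0 < z /\ forall x, x \in l -> z %% x.1 ^ e = x.2 %% x.1 ^ e.
Proof.
elim: l => [|[p a] l IH] /=; first by move=> _ _; exists 1.
case/andP=> pp pl /andP[pn ul].
have [z0 [_ Hz0]] := IH pl ul.
set M := \prod_(x <- l) x.1 ^ e.
have cop : coprime (p ^ e) M.
  apply: coprime_prod_seq; apply/allP => x xl.
  have xm : x.1 \in map fst l by exact: map_f.
  have px : prime x.1 := allP pl _ xm.
  apply: coprimeXl; apply: coprimeXr.
  rewrite prime_coprime // dvdn_prime2 //.
  by apply/eqP => E; move: pn; rewrite E xm.
have pe0 : 0 < p ^ e by rewrite expn_gt0 prime_gt0.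
have M0 : 0 < M.
  rewrite /M big_seq; apply: prodn_cond_gt0 => x xl.
  by rewrite expn_gt0 prime_gt0 // (allP pl _ (map_f _ xl)).
exists (chinese (p ^ e) M a z0 + p ^ e * M); split.
  by rewrite addn_gt0 muln_gt0 pe0 M0 orbT.
move=> x; rewrite inE; case/orP => [/eqP->|xl] /=.
  by rewrite -modnDmr mulnC modnMl addn0 chinese_modl.
have dM : x.1 ^ e %| M by rewrite /M; exact: (dvd_prod_seq (fun y : nat * nat => y.1 ^ e) l x xl).
rewrite -modnDmr (eqP (dvdn_mull _ dM)) addn0.
rewrite -(modn_dvdm _ dM) chinese_modr // (modn_dvdm _ dM).
exact: Hz0.
Qed.

Definition boxl (b w : nat) := [seq (r, s) | r <- iota 1 w, s <- iota 1 (w ^ b)].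
Definition circ b w P := [seq x <- boxl b w | mark_eqb (P x.1 x.2) Circle].
Definition crossl b w P := [seq x <- boxl b w | mark_eqb (P x.1 x.2) Cross].

Lemma mark_eqbP x y : reflect (x = y) (mark_eqb x y).
Proof. by case: x; case: y; constructor. Qed.

Lemma mem_boxl b w x : (x \in boxl b w) = [&& 1 <= x.1 <= w & 1 <= x.2 <= w ^ b].
Proof.
case: x => r s; apply/allpairsP/idP => [[[r' s'] /= [h1 h2 [-> ->]]]|/andP[h1 h2]].
  by move: h1 h2; rewrite !mem_iota !add1n !ltnS => -> ->.
by exists (r, s); rewrite /= !mem_iota !add1n !ltnS h1 h2.
Qed.

Lemma mem_circ b w P x : (x \in circ b w P) <-> is_circle b w P x.1 x.2.
Proof.
rewrite mem_filter mem_boxl /is_circle /in_box; split.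
  by case/andP => /mark_eqbP -> /andP[-> ->].
by case=> [[-> ->] /mark_eqbP ->].
Qed.

Lemma mem_crossl b w P x : (x \in crossl b w P) <-> is_cross b w P x.1 x.2.
Proof.
rewrite mem_filter mem_boxl /is_cross /in_box; split.
  by case/andP => /mark_eqbP -> /andP[-> ->].
by case=> [[-> ->] /mark_eqbP ->].
Qed.

Lemma missed b w P p : 0 < p -> ~ circles_contain_complete_rectangle b w P p ->
  exists i j, i < p /\ j < p ^ b /\
    forall r s, is_circle b w P r s -> ~ (r %% p = i /\ s %% p ^ b = j).
Proof.
move=> p0 Hn.
set L := [seq (i, j) | i <- iota 0 p, j <- iota 0 (p ^ b)].
set C := circ b w P.
pose pr (ij : nat * nat) := fun x : nat * nat => (x.1 %% p == ij.1) && (x.2 %% p ^ b == ij.2).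
pose good ij := has (pr ij) C.
case: (boolP (all good L)) => [allg|].
  exfalso; apply: Hn.
  pose f ij := nth (0, 0) C (find (pr ij) C).
  have fC ij : ij \in L -> f ij \in C /\ pr ij (f ij).
    move=> ijL; have g := allP allg _ ijL.
    split; first by rewrite mem_nth // -has_find.
    exact: nth_find.
  exists (map f L); split; last first.
    by move=> x /mapP[ij ijL ->]; apply/mem_circ; case: (fC ij ijL).
  split.
  - rewrite map_inj_in_uniq.
      apply: allpairs_uniq; rewrite ?iota_uniq //.
      by move=> [a1 a2] [c1 c2] _ _ /= [-> ->].
    move=> ij1 ij2 h1 h2 E.
    have [_ /andP[/eqP a1 /eqP a2]] := fC ij1 h1.
    have [_ /andP[/eqP c1 /eqP c2]] := fC ij2 h2.
    have e1 : ij1 = ((f ij1).1 %% p, (f ij1).2 %% p ^ b) by rewrite a1 a2; case: (ij1).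
    have e2 : ij2 = ((f ij2).1 %% p, (f ij2).2 %% p ^ b) by rewrite c1 c2; case: (ij2).
    by rewrite e1 e2 E.
  - by rewrite size_map size_allpairs !size_iota expnS.
  - move=> x /mapP[ij ijL ->]; have [/mem_circ [[/andP[h1 _] /andP[h2 _]] _] _] := fC ij ijL.
    by [].
  - move=> i j ip jp.
    have ijL : (i, j) \in L by apply/allpairsP; exists (i, j); rewrite /= !mem_iota.
    exists (f (i, j)); first exact: map_f.
    by have [_ /andP[/eqP -> /eqP ->]] := fC _ ijL.
case/allPn => [[i j] /allpairsP [[i' j'] /= [hi hj [-> ->]]] ng].
exists i', j'; move: hi hj; rewrite !mem_iota /= => hi hj; split=> //; split=> //.
move=> r s rc [e1 e2]; move/negP: ng; apply.
apply/hasP; exists (r, s); first by apply/mem_circ.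
by rewrite /pr /= e1 e2 !eqxx.
Qed.

Definition nxt (p : nat) : nat := s2val (prime_above p).
Definition Qs (w k : nat) : nat := iter k.+1 nxt w.

Lemma Qs_prime w k : prime (Qs w k).
Proof. by rewrite /Qs iterS /nxt; exact: (s2valP' (prime_above _)). Qed.

Lemma Qs_succ w k : Qs w k < Qs w k.+1.
Proof. by rewrite [Qs w k.+1]/Qs iterS /nxt; exact: (s2valP (prime_above _)). Qed.

Lemma Qs_gt w k : w < Qs w k.
Proof.
elim: k => [|k IH]; first by rewrite /Qs /= /nxt; exact: (s2valP (prime_above _)).
exact: ltn_trans IH (Qs_succ w k).
Qed.

Lemma Qs_lt {w k l} : k < l -> Qs w k < Qs w l.
Proof.
elim: l => [//|l IH]; rewrite ltnS leq_eqVlt => /orP[/eqP->|/IH h].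
  exact: Qs_succ.
exact: ltn_trans h (Qs_succ w l).
Qed.

Lemma Qs_inj w : injective (Qs w).
Proof.
move=> k l E; case: (ltngtP k l) => // h.
  by have := @Qs_lt w _ _ h; rewrite E ltnn.
by have := @Qs_lt w _ _ h; rewrite E ltnn.
Qed.

Definition okp b w P p (ij : nat * nat) :=
  [&& ij.1 < p, ij.2 < p ^ b &
      ~~ has (fun x : nat * nat => (x.1 %% p == ij.1) && (x.2 %% p ^ b == ij.2)) (circ b w P)].
Definition Lp b p := [seq (i, j) | i <- iota 0 p, j <- iota 0 (p ^ b)].
Definition mp b w P p := nth (0, 0) (Lp b p) (find (okp b w P p) (Lp b p)).

Lemma mp_ok b w P p : 0 < p -> ~ circles_contain_complete_rectangle b w P p ->
  okp b w P p (mp b w P p).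
Proof.
move=> p0 Hn; have [i [j [ip [jp Hc]]]] := missed b w P p p0 Hn.
apply: nth_find; apply/hasP; exists (i, j).
  by apply/allpairsP; exists (i, j); rewrite /= !mem_iota.
rewrite /okp /= ip jp /=; apply/hasPn => x /mem_circ xc.
by apply/negP => /andP[/eqP e1 /eqP e2]; exact: (Hc _ _ xc).
Qed.

Lemma negres m z c : 0 < m -> c %% m = (m - z %% m) %% m -> m %| z + c.
Proof.
move=> m0 e; rewrite /dvdn -modnDmr e modnDmr -modnDml subnKC ?modnn //.
exact: ltnW (ltn_pmod _ m0).
Qed.

Lemma map_fst_pair (T : Type) (f g : T -> nat) (l : seq T) :
  map fst [seq (f x, g x) | x <- l] = map f l.
Proof. by rewrite -map_comp. Qed.

Lemma mem_cat_l {T : eqType} {s2 s1 : seq T} {x} : x \in s1 -> x \in s1 ++ s2.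
Proof. by rewrite mem_cat => ->. Qed.
Lemma mem_cat_r {T : eqType} {s1 s2 : seq T} {x} : x \in s2 -> x \in s1 ++ s2.
Proof. by rewrite mem_cat => ->; rewrite orbT. Qed.

Lemma small_eq {m x y} : x < m -> y < m -> x %% m = y %% m -> x = y.
Proof. by move=> xm ym; rewrite !modn_small. Qed.

Theorem mainTheorem4 (b : nat) (hb : 1 <= b) (w : nat) (hw : 1 <= w)
    (P : nat -> nat -> mark) :
  realizable b w P <->
  (forall p : nat, prime p -> ~ circles_contain_complete_rectangle b w P p).
Proof.
split.
  move=> [u [v [u1 [v1 [Hc Hx]]]]] p pp [S [[Su Ssz Spos Scov] Sc]].
  have p0 := prime_gt0 pp.
  have pb0 : 0 < p ^ b by rewrite expn_gt0 p0.
  have [x xS [e1 e2]] := Scov ((p - u %% p) %% p) ((p ^ b - v %% p ^ b) %% p ^ b)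
     (ltn_pmod _ p0) (ltn_pmod _ pb0).
  have := Hc _ _ (Sc x xS); apply/negP.
  have [x1 _] := Spos x xS.
  apply: (invis_of b _ _ p) => //; first by rewrite addn_gt0 x1 orbT.
    by apply: negres; rewrite // e1 modn_mod.
  by apply: negres; rewrite // e2 modn_mod.
move=> H.
set SP := [seq p <- iota 0 w.+1 | prime p].
have SPP p : p \in SP -> prime p /\ p <= w.
  by rewrite mem_filter mem_iota ltnS => /andP[-> /andP[_ ->]].
have SPU : uniq SP by rewrite filter_uniq // iota_uniq.
set K := (w ^ b).+1.
set X := crossl b w P.
pose q (x : nat * nat) := Qs w (x.1 * K + x.2).
set QX := map q X.
have XU : uniq X.
  rewrite filter_uniq // allpairs_uniq ?iota_uniq //.
  by move=> [a1 a2] [c1 c2] _ _ /= [-> ->].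
have qinj : {in X &, injective q}.
  move=> x y /mem_crossl [[_ /andP[_ hx]] _] /mem_crossl [[_ /andP[_ hy]] _] /Qs_inj E.
  have K0 : 0 < K by [].
  have hx' : x.2 < K by rewrite ltnS.
  have hy' : y.2 < K by rewrite ltnS.
  have E1 := congr1 (fun n => n %/ K) E; have E2 := congr1 (fun n => n %% K) E.
  move: E1 E2 => /=; rewrite !divnMDl // !modnMDl !divn_small // !modn_small // !addn0.
  by case: x y {hx hy hx' hy' E} => [x1 x2] [y1 y2] /= -> ->.
have QXU : uniq QX by rewrite map_inj_in_uniq.
have QXP p : p \in QX -> prime p /\ w < p.
  by case/mapP => x _ ->; split; [exact: Qs_prime | exact: Qs_gt].
set Lu := [seq (p, p - (mp b w P p).1) | p <- SP] ++ [seq (q x, q x - x.1) | x <- X].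
have mLu : map fst Lu = SP ++ QX by rewrite map_cat !map_fst_pair map_id.
have disj1 : ~~ has (mem SP) QX.
  apply/hasPn => p /QXP [_ wp]; apply/negP => /SPP [_ pw].
  by move: wp; rewrite ltnNge pw.
have [u [u0 Hu]] : exists z, 0 < z /\ forall x, x \in Lu -> z %% x.1 ^ 1 = x.2 %% x.1 ^ 1.
  apply: crt; rewrite mLu ?cat_uniq ?SPU ?QXU ?disj1 //.
  apply/allP => p; rewrite mem_cat => /orP[/SPP[]|/QXP[]] //.
set N := \prod_(r <- iota 1 w) (u + r).
set Lg := [seq p <- primes N | (w < p) && (p \notin QX)].
set Lv := [seq (p, p ^ b - (mp b w P p).2) | p <- SP] ++
   ([seq (q x, q x ^ b - x.2) | x <- X] ++ [seq (p, 0) | p <- Lg]).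
have mLv : map fst Lv = SP ++ (QX ++ Lg).
  by rewrite map_cat map_cat !map_fst_pair !map_id.
have [v [v0 Hv]] : exists z, 0 < z /\ forall x, x \in Lv -> z %% x.1 ^ b = x.2 %% x.1 ^ b.
  apply: crt; rewrite mLv.
    apply/allP => p; rewrite !mem_cat => /orP[/SPP[]|/orP[/QXP[]|]] //.
    by rewrite mem_filter mem_primes => /andP[_ /andP[->]].
  rewrite cat_uniq SPU has_cat (negbTE disj1) cat_uniq QXU filter_uniq ?primes_uniq //=.
  rewrite andbT; apply/andP; split.
    apply/hasPn => p; rewrite mem_filter => /andP[/andP[wp _] _].
    by apply/negP => /SPP [_ pw]; move: wp; rewrite ltnNge pw.
  by apply/hasPn => p; rewrite mem_filter => /andP[/andP[_ ->] _].
exists u, v; split=> //; split=> //; split.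
- move=> r s rs.
  have [[/andP[r1 rw] /andP[s1 sw]] _] := rs.
  apply: vis_of; first by rewrite addn_gt0 u0.
  move=> p pp pr ps.
  have p0 := prime_gt0 pp.
  have pb0 : 0 < p ^ b by rewrite expn_gt0 p0.
  case: (leqP p w) => pw.
  + have pSP : p \in SP by rewrite mem_filter pp mem_iota ltnS pw.
    have hok := mp_ok b w P p p0 (H p pp).
    have hu := Hu _ (mem_cat_l (map_f (fun p => (p, p - (mp b w P p).1)) pSP)).
    have hv := Hv _ (mem_cat_l (map_f (fun p => (p, p ^ b - (mp b w P p).2)) pSP)).
    move: hok hu hv; rewrite /okp /= expn1; case: (mp b w P p) => i j /= /and3P[ip jp nh] hu hv.
    rewrite (neg_mod_dvd _ _ _ r (ltnW ip) hu) in pr.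
    rewrite (neg_mod_dvd _ _ _ s (ltnW jp) hv) in ps.
    rewrite (modn_small ip) in pr; rewrite (modn_small jp) in ps.
    move/hasPn: nh => /(_ (r, s) (proj2 (mem_circ b w P (r, s)) rs)).
    by rewrite /= pr ps.
  + have wpb : w ^ b < p ^ b by rewrite ltn_exp2r.
    case: (boolP (p \in QX)) => pQ.
    * case/mapP: pQ => x xX pe.
      have hu := Hu _ (mem_cat_r (map_f (fun x => (q x, q x - x.1)) xX)).
      have hv := Hv _ (mem_cat_r (mem_cat_l (map_f (fun x => (q x, q x ^ b - x.2)) xX))).
      move: hu hv; rewrite /= expn1 -pe => hu hv.
      have [[/andP[x1 xw] /andP[x21 x2w]] xc] := proj1 (mem_crossl b w P x) xX.
      rewrite (neg_mod_dvd _ _ _ r (leq_trans xw (ltnW pw)) hu) in pr.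
      rewrite (neg_mod_dvd _ _ _ s (ltnW (leq_ltn_trans x2w wpb)) hv) in ps.
      have er : r = x.1 := small_eq (leq_ltn_trans rw pw) (leq_ltn_trans xw pw) (eqP pr).
      have es : s = x.2 := small_eq (leq_ltn_trans sw wpb) (leq_ltn_trans x2w wpb) (eqP ps).
      by case: rs => _; rewrite er es xc.
    * have N0 : 0 < N by apply: prodn_gt0 => r'; rewrite addn_gt0 u0.
      have rI : r \in iota 1 w by rewrite mem_iota r1 add1n ltnS.
      have pN : p %| N := dvdn_trans pr (dvd_prod_seq (fun r => u + r) (iota 1 w) r rI).
      have pLg : p \in Lg by rewrite mem_filter pw pQ mem_primes pp N0 pN.
      have hv := Hv _ (mem_cat_r (mem_cat_r (map_f (fun p => (p, 0)) pLg))).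
      move: hv; rewrite /= mod0n => hv.
      have pv : p ^ b %| v by rewrite /dvdn hv.
      rewrite dvdn_addr // in ps.
      have := dvdn_leq s1 ps.
      by rewrite leqNgt (leq_ltn_trans sw wpb).
- move=> r s rs.
  have xX : (r, s) \in X := proj2 (mem_crossl b w P (r, s)) rs.
  have [[/andP[r1 rw] /andP[s1 sw]] _] := rs.
  have hu := Hu _ (mem_cat_r (map_f (fun x => (q x, q x - x.1)) xX)).
  have hv := Hv _ (mem_cat_r (mem_cat_l (map_f (fun x => (q x, q x ^ b - x.2)) xX))).
  move: hu hv; rewrite /= expn1 => hu hv.
  have [pp wp] : prime (q (r, s)) /\ w < q (r, s).
    by split; [exact: Qs_prime | exact: Qs_gt].
  have wpb : w ^ b < q (r, s) ^ b by rewrite ltn_exp2r.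
  apply: (invis_of b _ _ (q (r, s))) => //; first by rewrite addn_gt0 u0.
    by rewrite (neg_mod_dvd _ _ _ r (leq_trans rw (ltnW wp)) hu).
  by rewrite (neg_mod_dvd _ _ _ s (ltnW (leq_ltn_trans sw wpb)) hv).
Qed.
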